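(* For every small category $C$, the category $Sd^2(C)=Sd(Sd(C))$ is a poset; that is, for any two objects $X,Y$ of $Sd^2(C)$ there is at most one morphism $X\to Y$, and if there are morphisms $X\to Y$ and $Y\to X$ then $X=Y$.
   Context: Let $C$ be a small category. For $q\ge 0$ let $[q]=\{0<1<\dots<q\}$, viewed as a category. A $q$-simplex of the nerve $NC$ is a functor $X:[q]\to C$, i.e. a chain $X_0\to X_1\to\dots\to X_q$ of $q$ composable arrows of $C$; write $q_X=q$. A simplex is degenerate if it is of the form $Y\circ s$ for a simplex $Y$ and a surjective order-preserving map $s:[q]\to[p]$ with $p<q$ (equivalently, one of its arrows $X_{i-1}\to X_i$ is an identity); otherwise it is non-degenerate. The category $\Delta/C$ has as objects all simplices of $NC$ (of all dimensions $q\ge0$), and a morphism $X\to Y$ is an order-preserving map $\xi:[q_X]\to[q_Y]$ with $Y\circ\xi=X$, written $\xi_*$; composition is composition of maps. Given a simplex $X$ of dimension $q$ and a surjective order-preserving $s:[q+1]\to[q]$, let $d,d':[q]\to[q+1]$ be the two order-preserving right inverses of $s$; the two morphisms $d_*,d'_*:X\to X\circ s$ are called elementary equivalent. Let $\sim$ be the smallest equivalence relation on the morphisms of $\Delta/C$ (relating only morphisms with the same source and target) which is compatible with composition and contains all pairs of elementary equivalent morphisms. $[\Delta/C]$ is the quotient category with the same objects and with morphisms the $\sim$-classes $[\xi_*]$. The subdivision $Sd(C)$ is the full subcategory of $[\Delta/C]$ whose objects are the non-degenerate simplices of $NC$. Since $Sd(C)$ is again a small category, $Sd^2(C)=Sd(Sd(C))$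 is defined by applying the same construction to $Sd(C)$. *)

(* Defs.v *)
From Stdlib Require Import ProofIrrelevance FunctionalExtensionality
  PropExtensionality IndefiniteDescription.
From mathcomp Require Import all_boot.

Set Implicit Arguments.
Unset Strict Implicit.
Unset Printing Implicit Defensive.

(** * Small categories (composition written in diagrammatic order). *)
Record Cat := MkCat {
  Ob :> Type;
  Hom : Ob -> Ob -> Type;
  idc : forall a, Hom a a;
  compc : forall a b c, Hom a b -> Hom b c -> Hom a c;
  comp1c : forall a b (f : Hom a b), compc (idc a) f = f;
  compc1 : forall a b (f : Hom a b), compc f (idc b) = f;
  compcA : forall a b c d (f : Hom a b) (g : Hom b c) (h : Hom c d),
      compc f (compc g h) = compc (compc f g) h
}.
Arguments Hom : clear implicits.
Arguments idc {C} a : rename.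
Arguments compc {C a b c} f g : rename.

(** * Order-preserving maps [p] -> [q], where [q] = 'I_q.+1 = {0<...<q}. *)
Definition mono (p q : nat) :=
  {f : 'I_p.+1 -> 'I_q.+1 | forall i j : 'I_p.+1, i <= j -> f i <= f j}.

Definition mono_id (p : nat) : mono p p := @exist _ (fun f : 'I_p.+1 -> 'I_p.+1 => forall i j : 'I_p.+1, i <= j -> f i <= f j) id (fun i j h => h).

Definition mono_comp p q r (xi : mono p q) (eta : mono q r) : mono p r :=
  @exist _ (fun f : 'I_p.+1 -> 'I_r.+1 => forall i j : 'I_p.+1, i <= j -> f i <= f j)
    (fun i => proj1_sig eta (proj1_sig xi i))
    (fun i j h => proj2_sig eta _ _ (proj2_sig xi i j h)).

(** * Simplices of the nerve: functors [q] -> C. *)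
Section Nerve.
Variable C : Cat.

Record simplex := Simplex {
  sdim : nat;
  sob : 'I_sdim.+1 -> Ob C;
  shom : forall i j : 'I_sdim.+1, i <= j -> Hom C (sob i) (sob j);
  shom_id : forall (i : 'I_sdim.+1) (h : i <= i), shom h = idc (sob i);
  shom_comp : forall i j k : 'I_sdim.+1, forall (hij : i <= j) (hjk : j <= k) (hik : i <= k),
      shom hik = compc (shom hij) (shom hjk)
}.

Arguments sob s i : clear implicits.
Arguments shom s {i j} h.
Arguments sdim s : clear implicits.

Definition scomp (Y : simplex) p (xi : mono p (sdim Y)) : simplex.
Proof.
refine (@Simplex p (fun i => sob Y (proj1_sig xi i))
          (fun i j h => shom Y (proj2_sig xi i j h)) _ _).
- by move=> i h; apply: shom_id.
- by move=> i j k hij hjk hik; apply: shom_comp.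
Defined.

Lemma simplex_ext n ob (h1 h2 : forall i j : 'I_n.+1, i <= j -> Hom C (ob i) (ob j))
  p1 p2 q1 q2 :
  (forall i j h, h1 i j h = h2 i j h) ->
  @Simplex n ob h1 p1 q1 = @Simplex n ob h2 p2 q2.
Proof.
move=> e.
have E : h1 = h2.
  apply: functional_extensionality_dep => i.
  apply: functional_extensionality_dep => j.
  apply: functional_extensionality_dep => h.
  exact: e.
subst h2; f_equal; apply: proof_irrelevance.
Qed.

Lemma scomp_id (X : simplex) : scomp (mono_id (sdim X)) = X.
Proof. by case: X => n ob h p q; apply: simplex_ext. Qed.

Lemma scomp_comp (Z : simplex) p q (xi : mono p q) (eta : mono q (sdim Z)) :
  scomp (mono_comp xi eta) = scomp (Y := scomp eta) xi.
Proof.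
apply: simplex_ext => i j h /=; f_equal; apply: proof_irrelevance.
Qed.

Definition degenerate (X : simplex) : Prop :=
  exists (Y : simplex) (s : mono (sdim X) (sdim Y)),
    [/\ sdim Y < sdim X,
        (forall j, exists i, proj1_sig s i = j) &
        X = scomp s].

Definition nondegenerate (X : simplex) : Prop := ~ degenerate X.

Definition DHom (X Y : simplex) := {xi : mono (sdim X) (sdim Y) | scomp xi = X}.

Definition did (X : simplex) : DHom X X := exist _ (mono_id (sdim X)) (scomp_id X).

Lemma scomp_transport (W Y : simplex) (e : W = Y) p
  (f : mono p (sdim Y)) (f' : mono p (sdim W)) :
  (forall i, nat_of_ord (proj1_sig f' i) = proj1_sig f i) ->
  scomp f' = scomp f.
Proof.
subst W => e.
have E : proj1_sig f' = proj1_sig f.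
  by apply: functional_extensionality => i; apply: val_inj; apply: e.
case: f' f E {e} => f' hf' [f hf] /= E; subst f'.
by have -> : hf' = hf by apply: proof_irrelevance.
Qed.

Lemma dcomp_proof (X Y Z : simplex) (f : DHom X Y) (g : DHom Y Z) :
  scomp (Y := Z) (mono_comp (proj1_sig f) (proj1_sig g)) = X.
Proof.
case: f => f hf; case: g => g hg /=.
rewrite scomp_comp -[RHS]hf; exact: scomp_transport.
Qed.

Definition dcomp (X Y Z : simplex) (f : DHom X Y) (g : DHom Y Z) : DHom X Z :=
  exist _ (mono_comp (proj1_sig f) (proj1_sig g)) (dcomp_proof f g).

Lemma dhom_eq (X Y : simplex) (f g : DHom X Y) :
  (forall i, proj1_sig (proj1_sig f) i = proj1_sig (proj1_sig g) i) -> f = g.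
Proof.
case: f => [[f mf] hf]; case: g => [[g mg] hg] /= e.
have E : f = g by apply: functional_extensionality.
subst g; move: hf; have -> : mf = mg by apply: proof_irrelevance.
by move=> hf; f_equal; apply: proof_irrelevance.
Qed.

(** Elementary equivalent pairs: [d_*, d'_* : X -> X \circ s] where
    [s : [q+1] -> [q]] is surjective order-preserving and [d, d'] are
    order-preserving right inverses of [s].  (Morphisms of Delta/C are
    order-preserving, so [f], [g] below range exactly over such [d_*].) *)
Definition elementary (X Y : simplex) (f g : DHom X Y) : Prop :=
  exists s : mono (sdim Y) (sdim X),
    [/\ sdim Y = (sdim X).+1,
        (forall j, exists i, proj1_sig s i = j),
        Y = scomp s,
        (forall i, proj1_sig s (proj1_sig (proj1_sig f) i) = i) &
        (forall i, proj1_sig s (proj1_sig (proj1_sig g) i) = i)].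

Inductive sim : forall X Y : simplex, DHom X Y -> DHom X Y -> Prop :=
| sim_elem X Y (f g : DHom X Y) : elementary f g -> sim f g
| sim_refl X Y (f : DHom X Y) : sim f f
| sim_sym X Y (f g : DHom X Y) : sim f g -> sim g f
| sim_trans X Y (f g h : DHom X Y) : sim f g -> sim g h -> sim f h
| sim_compl X Y Z (f f' : DHom X Y) (g : DHom Y Z) :
    sim f f' -> sim (dcomp f g) (dcomp f' g)
| sim_compr X Y Z (f : DHom X Y) (g g' : DHom Y Z) :
    sim g g' -> sim (dcomp f g) (dcomp f g').

Definition qhom (X Y : simplex) := {P : DHom X Y -> Prop | exists f, P = sim f}.

Definition cls (X Y : simplex) (f : DHom X Y) : qhom X Y :=
  exist _ (sim f) (ex_intro _ f erefl).

Definition rep (X Y : simplex) (P : qhom X Y) : DHom X Y :=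
  proj1_sig (constructive_indefinite_description _ (proj2_sig P)).

Lemma cls_rep (X Y : simplex) (P : qhom X Y) : cls (rep P) = P.
Proof.
rewrite /rep; case: (constructive_indefinite_description _ _) => f /= e.
case: P e => P hP /= e; subst P; rewrite /cls; f_equal; apply: proof_irrelevance.
Qed.

Lemma cls_eq (X Y : simplex) (f g : DHom X Y) : sim f g -> cls f = cls g.
Proof.
move=> fg.
have E : sim f = sim g.
  apply: functional_extensionality => h; apply: propositional_extensionality.
  split=> H; first exact: sim_trans (sim_sym fg) H.
  exact: sim_trans fg H.
rewrite /cls; move: (ex_intro _ f _) (ex_intro _ g _); rewrite E => p1 p2.
by f_equal; apply: proof_irrelevance.
Qed.

Lemma sim_rep (X Y : simplex) (f : DHom X Y) : sim (rep (cls f)) f.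
Proof.
have := cls_rep (cls f); rewrite /cls => [[E]].
by rewrite E; apply: sim_refl.
Qed.

Definition qid (X : simplex) : qhom X X := cls (did X).
Definition qcomp (X Y Z : simplex) (P : qhom X Y) (Q : qhom Y Z) : qhom X Z :=
  cls (dcomp (rep P) (rep Q)).

Lemma dcomp1 (X Y : simplex) (f : DHom X Y) : dcomp (did X) f = f.
Proof. exact: dhom_eq. Qed.
Lemma dcompd1 (X Y : simplex) (f : DHom X Y) : dcomp f (did Y) = f.
Proof. exact: dhom_eq. Qed.
Lemma dcompA (X Y Z W : simplex) (f : DHom X Y) (g : DHom Y Z) (h : DHom Z W) :
  dcomp f (dcomp g h) = dcomp (dcomp f g) h.
Proof. exact: dhom_eq. Qed.

Lemma sim_comp (X Y Z : simplex) (f f' : DHom X Y) (g g' : DHom Y Z) :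
  sim f f' -> sim g g' -> sim (dcomp f g) (dcomp f' g').
Proof.
move=> H1 H2; apply: sim_trans (sim_compl g H1) _; exact: sim_compr.
Qed.

Lemma qcomp1 (X Y : simplex) (P : qhom X Y) : qcomp (qid X) P = P.
Proof.
rewrite /qcomp /qid -[in RHS](cls_rep P); apply: cls_eq.
rewrite -[X in sim _ X]dcomp1; apply: sim_comp; [exact: sim_rep|exact: sim_refl].
Qed.

Lemma qcompq1 (X Y : simplex) (P : qhom X Y) : qcomp P (qid Y) = P.
Proof.
rewrite /qcomp /qid -[in RHS](cls_rep P); apply: cls_eq.
rewrite -[X in sim _ X]dcompd1; apply: sim_comp; [exact: sim_refl|exact: sim_rep].
Qed.

Lemma qcompA (X Y Z W : simplex) (P : qhom X Y) (Q : qhom Y Z) (R : qhom Z W) :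
  qcomp P (qcomp Q R) = qcomp (qcomp P Q) R.
Proof.
rewrite /qcomp; apply: cls_eq.
apply: sim_trans (sim_comp (sim_refl _) (sim_rep _)) _; rewrite dcompA.
exact: sim_comp (sim_sym (sim_rep _)) (sim_refl _).
Qed.

End Nerve.

Definition SdOb (C : Cat) := {X : simplex C | nondegenerate X}.

Definition Sd (C : Cat) : Cat :=
  @MkCat (SdOb C)
    (fun X Y => qhom (proj1_sig X) (proj1_sig Y))
    (fun X => qid (proj1_sig X))
    (fun X Y Z P Q => qcomp P Q)
    (fun X Y P => qcomp1 P)
    (fun X Y P => qcompq1 P)
    (fun X Y Z W P Q R => qcompA P Q R).

(* Main.v *)
Require Import Defs.
From Stdlib Require Import ProofIrrelevance FunctionalExtensionality.
From mathcomp Require Import all_boot zify.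
Set Implicit Arguments.
Unset Strict Implicit.
Unset Printing Implicit Defensive.

Definition trH (D : Cat) (a b a' b' : D) (ea : a = a') (eb : b = b')
  (f : Hom D a b) : Hom D a' b' :=
  match ea in _ = x return Hom D x b' with
  | erefl => match eb in _ = y return Hom D a y with erefl => f end end.

Lemma trH_id (D : Cat) (a b : D) (e1 : a = a) (e2 : b = b) f : trH e1 e2 f = f.
Proof. by rewrite (proof_irrelevance _ e1 erefl) (proof_irrelevance _ e2 erefl). Qed.

Lemma simplex_eq (D : Cat) n ob1 ob2 h1 h2 p1 p2 q1 q2
  (eo : forall i : 'I_n.+1, ob1 i = ob2 i) :
  (forall i j h, trH (eo i) (eo j) (h1 i j h) = h2 i j h) ->
  @Simplex D n ob1 h1 p1 q1 = @Simplex D n ob2 h2 p2 q2.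
Proof.
move=> H.
have E : ob1 = ob2 by apply: functional_extensionality.
subst ob2; apply: simplex_ext => i j h; rewrite -H; by rewrite trH_id.
Qed.

Lemma mono_strict p q (f : 'I_p.+1 -> 'I_q.+1) :
  (forall i j : 'I_p.+1, i <= j -> f i <= f j) -> injective f ->
  forall i j : 'I_p.+1, i < j -> f i < f j.
Proof.
move=> mf inj i j lt; rewrite ltn_neqAle (mf i j (ltnW lt)) andbT.
apply/negP => /eqP E; have E2 : f i = f j by apply: val_inj.
have E3 := inj _ _ E2; subst j; by rewrite ltnn in lt.
Qed.

Lemma mono_inj_le p q (f : 'I_p.+1 -> 'I_q.+1) : injective f -> p <= q.
Proof. by move=> /leq_card; rewrite !card_ord. Qed.

Lemma mono_inj_id n (f : 'I_n.+1 -> 'I_n.+1) :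
  (forall i j : 'I_n.+1, i <= j -> f i <= f j) -> injective f -> forall i, f i = i.
Proof.
move=> mf inj; have st := mono_strict mf inj.
have C1 : forall k, k <= n -> k <= f (inord k).
  elim=> [|k IH] hk //.
  have L : @inord n k < @inord n k.+1 by rewrite !inordK //; lia.
  have := st _ _ L; have := IH (ltnW hk); lia.
have C2 : forall k, k <= n -> f (inord (n - k)) + k <= n.
  elim=> [|k IH] hk; first by rewrite addn0 -ltnS.
  have L : @inord n (n - k.+1) < @inord n (n - k) by rewrite !inordK //; lia.
  have := st _ _ L; have := IH (ltnW hk); lia.
move=> i; apply: val_inj => /=.
have h1 := C1 i (leq_ord i); have h2 := C2 (n - i) (leq_subr _ _).
rewrite inord_val in h1; have E : n - (n - i) = i by have := leq_ord i; lia.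
rewrite E inord_val in h2; lia.
Qed.

Lemma degen_of_id (D : Cat) (X : simplex D) (k : nat) (hk : k < sdim X)
  (e : sob (s:=X) (@inord (sdim X) k) = sob (s:=X) (@inord (sdim X) k.+1)) :
  (forall hle : @inord (sdim X) k <= @inord (sdim X) k.+1,
      shom hle = trH erefl e (idc _)) -> degenerate X.
Proof.
case: X hk e => n ob h p q /= hk e H.
case: n ob h p q hk e H => [//|m] ob h p q hk e H.
pose sf i := if i <= k then i else i.-1.
pose df j := if j <= k then j else j.+1.
have sP : forall i : 'I_m.+2, sf i < m.+1.
  move=> i; have := ltn_ord i; rewrite /sf; case: (leqP i k); lia.
have dP : forall j : 'I_m.+1, df j < m.+2.
  move=> j; have := ltn_ord j; rewrite /df; case: (leqP j k); lia.
have smon : forall i j : 'I_m.+2, i <= j -> Ordinal (sP i) <= Ordinal (sP j).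
  move=> i j /=; rewrite /sf; case: (leqP i k); case: (leqP j k); lia.
have dmon : forall i j : 'I_m.+1, i <= j -> Ordinal (dP i) <= Ordinal (dP j).
  move=> i j /=; rewrite /df; case: (leqP i k); case: (leqP j k); lia.
pose s : mono m.+1 m := exist _ _ smon.
pose d : mono m m.+1 := exist _ _ dmon.
have key : forall i : 'I_m.+2, proj1_sig d (proj1_sig s i) = i \/
    (i = inord k.+1 /\ proj1_sig d (proj1_sig s i) = inord k).
  move=> i; case: (boolP (nat_of_ord i == k.+1)) => [/eqP Ei|Ni].
  - right; split; apply: val_inj => /=.
      by rewrite inordK.
    rewrite inordK; last lia.
    by rewrite Ei /sf /df ltnn /= leqnn.
  - left; apply: val_inj => /=; rewrite /sf /df.
    case: (leqP i k) => ?; [case: (leqP i k)|case: (leqP i.-1 k)]; lia.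
exists (scomp (Y := Simplex p q) d), s; split => //.
  move=> j; exists (proj1_sig d j); apply: val_inj => /=.
  rewrite /sf /df; case: (leqP j k) => ?; [case: (leqP j k)|case: (leqP j.+1 k)]; lia.
have eo : forall i, ob i = ob (proj1_sig d (proj1_sig s i)).
  move=> i; case: (key i) => [->//|[E1 E2]]; rewrite E2 E1; exact: esym e.
rewrite /scomp /=. refine (@simplex_eq D m.+1 _ _ _ _ _ _ _ _ eo _) => i j hij.
have hKK : @inord m.+1 k <= @inord m.+1 k.+1 by rewrite !inordK; lia.
suff HH : forall (a' b' : 'I_m.+2) (hab : a' <= b') (ea : ob i = ob a') (eb : ob j = ob b'),
   (a' = i \/ (i = inord k.+1 /\ a' = inord k)) ->
   (b' = j \/ (j = inord k.+1 /\ b' = inord k)) ->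
   trH ea eb (h i j hij) = h a' b' hab.
  by apply: HH; apply key.
move=> a' b' hab ea eb [Ea|[Ei Ea]] [Eb|[Ej Eb]].
- subst a' b'; by rewrite trH_id (proof_irrelevance _ hab hij).
- subst a' b' j.
  rewrite (q i (inord k) (inord k.+1) hab hKK hij) H.
  clear H; move: eb e; move: (ob (inord k.+1)) => o eb e; subst o.
  by rewrite !trH_id (proof_irrelevance _ e erefl) compc1.
- subst a' b' i.
  rewrite (q (inord k) (inord k.+1) j hKK hij hab) H.
  clear H; move: ea e (h _ _ hij); move: (ob (inord k.+1)) => o ea e f; subst o.
  by rewrite !trH_id (proof_irrelevance _ e erefl) comp1c.
- subst a' b' i j.
  rewrite !p; move: ea eb; move: (ob (inord k.+1)) => o ea eb; subst o.
  by rewrite trH_id.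
Qed.

Lemma shom_eq_id (D : Cat) (Y : simplex D) (a b : 'I_(sdim Y).+1) (E : a = b)
  (hab : a <= b) (e : sob (s:=Y) a = sob (s:=Y) b) : shom hab = trH erefl e (idc _).
Proof. subst b; by rewrite shom_id trH_id. Qed.

Lemma inj_of_nondeg (D : Cat) (Y : simplex D) p (xi : mono p (sdim Y)) :
  nondegenerate (scomp xi) -> injective (proj1_sig xi).
Proof.
move=> nd i j E.
suff H : forall i j : 'I_p.+1, i < j -> proj1_sig xi i = proj1_sig xi j -> False.
  case: (ltngtP i j) => [lt|lt|/val_inj //]; first by case: (H _ _ lt E).
  by case: (H _ _ lt (esym E)).
move=> {i j E} i j lt E.
have hk : nat_of_ord i < p by have := ltn_ord j; lia.
have mx := proj2_sig xi.
have Ek : proj1_sig xi (@inord p i) = proj1_sig xi (@inord p i.+1).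
  rewrite inord_val; apply: val_inj; apply/eqP; rewrite eqn_leq; apply/andP; split.
    by apply: mx; rewrite inordK //; lia.
  rewrite E; apply: mx; rewrite inordK //; lia.
have e : sob (s:= scomp xi) (@inord p i) = sob (s:=scomp xi) (@inord p i.+1).
  by rewrite /= Ek.
apply: nd; apply: (@degen_of_id D (scomp xi) i hk e) => hle /=.
exact: shom_eq_id.
Qed.

Lemma sob_gen (D : Cat) (Y : simplex D) p (xi : mono p (sdim Y)) (X : simplex D)
  (e : scomp xi = X) (hp : (sdim X).+1 = p.+1) i :
  sob (s:=X) i = sob (s:=Y) (proj1_sig xi (cast_ord hp i)).
Proof. subst X; by rewrite cast_ord_id. Qed.

Lemma sob_of_dhom (D : Cat) (X Y : simplex D) (f : DHom X Y) i :
  sob (s:=X) i = sob (s:=Y) (proj1_sig (proj1_sig f) i).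
Proof. case: f => xi e /=; by rewrite (sob_gen e erefl) cast_ord_id. Qed.

Lemma inj_of_dhom (D : Cat) (X Y : simplex D) (f : DHom X Y) :
  nondegenerate X -> injective (proj1_sig (proj1_sig f)).
Proof. case: f => xi e /= nd; apply: inj_of_nondeg; by rewrite e. Qed.

Lemma scomp_inj_eq (D : Cat) (Y : simplex D) p (xi : mono p (sdim Y)) :
  p = sdim Y -> injective (proj1_sig xi) -> scomp xi = Y.
Proof.
move=> E; subst p => inj.
have Hid := mono_inj_id (proj2_sig xi) inj.
rewrite -[RHS]scomp_id; f_equal.
case: xi Hid {inj} => f mf /= Hid.
have E : f = id by apply: functional_extensionality.
subst f; rewrite /mono_id; f_equal; apply: proof_irrelevance.
Qed.

Definition antisym (D : Cat) := forall x y : D, Hom D x y -> Hom D y x -> x = y.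
Definition endo (D : Cat) := forall (x : D) (f : Hom D x x), f = idc x.

Lemma sd_antisym (D : Cat) : antisym (Sd D).
Proof.
move=> [X ndX] [Y ndY] /= [P [f _]] [Q [g _]].
have l1 := mono_inj_le (@inj_of_dhom _ _ _ f ndX).
have l2 := mono_inj_le (@inj_of_dhom _ _ _ g ndY).
have E : X = Y.
  case: f l1 l2 => xi e /= l1 l2; rewrite -e; apply: scomp_inj_eq; first lia.
  by have := @inj_of_dhom _ _ _ (exist _ xi e) ndX.
subst Y; f_equal; apply: proof_irrelevance.
Qed.

Lemma sd_endo (D : Cat) : endo (Sd D).
Proof.
move=> [X nd] [P [f Ef]]; subst P.
have -> : f = did X.
  apply: dhom_eq => i /=.
  have := mono_inj_id (proj2_sig (proj1_sig f)) (@inj_of_dhom _ _ _ f nd) i.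
  done.
rewrite /= /qid /cls; f_equal; apply: proof_irrelevance.
Qed.

Lemma trH_inv (D : Cat) (a b c : D) (e : c = b) (u : Hom D a b) :
  u = trH erefl e (trH erefl (esym e) u).
Proof. by subst c. Qed.

Lemma distinct (D : Cat) (acyc : antisym D) (en : endo D) (Y : simplex D) :
  nondegenerate Y -> forall a b : 'I_(sdim Y).+1, sob (s:=Y) a = sob (s:=Y) b -> a = b.
Proof.
move=> nd.
suff H : forall a b : 'I_(sdim Y).+1, a < b -> sob (s:=Y) a = sob (s:=Y) b -> False.
  move=> a b E; case: (ltngtP a b) => [lt|lt|/val_inj //]; first by case: (H _ _ lt E).
  by case: (H _ _ lt (esym E)).
move=> a b lt E.
have hk : nat_of_ord a < sdim Y by have := ltn_ord b; lia.
have h1 : @inord (sdim Y) a <= @inord (sdim Y) a.+1 by rewrite !inordK //; lia.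
have h2 : @inord (sdim Y) a.+1 <= b by rewrite !inordK //; lia.
have E' : sob (s:=Y) b = sob (s:=Y) (@inord (sdim Y) a) by rewrite inord_val.
have e := acyc _ _ (shom h1) (trH erefl E' (shom h2)).
apply: nd; apply: (@degen_of_id D Y a hk e) => hle.
have Hend := en _ (trH erefl (esym e) (shom hle)).
by rewrite -Hend -trH_inv.
Qed.

Lemma sd_thin (D : Cat) (acyc : antisym D) (en : endo D) (X Y : Sd D)
  (f g : Hom (Sd D) X Y) : f = g.
Proof.
case: X f g => X ndX; case: Y => Y ndY [P [f0 EP]] [Q [g0 EQ]] /=; subst P Q.
have -> : f0 = g0.
  apply: dhom_eq => i; apply: (distinct acyc en ndY).
  by rewrite -!sob_of_dhom.
f_equal; apply: proof_irrelevance.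
Qed.

Theorem theorem21 (C : Cat) :
  (forall (X Y : Ob (Sd (Sd C))) (f g : Hom (Sd (Sd C)) X Y), f = g) /\
  (forall X Y : Ob (Sd (Sd C)),
      Hom (Sd (Sd C)) X Y -> Hom (Sd (Sd C)) Y X -> X = Y).
Proof.
split.
- move=> X Y f g; apply: sd_thin; [exact: sd_antisym | exact: sd_endo].
- exact: sd_antisym.
Qed.
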